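(* Let $R$ be a semiprime ring which is both $2$-torsion free and $3$-torsion free, and let $T:R\to R$ be an additive map such that $T(x)x^3=0$ and $T(x^4)=0$ for all $x\in R$. Then $T(xy)=T(x)y$ for all $x,y\in R$.
   Context: $R$ is an associative ring. $R$ is $k$-torsion free if $kx=0$ implies $x=0$ for all $x\in R$. $R$ is semiprime if $aRa=\{0\}$ implies $a=0$. *)

(* Defs.v *)
From mathcomp Require Import all_boot all_algebra.
Set Implicit Arguments. Unset Strict Implicit. Unset Printing Implicit Defensive.
Import GRing.Theory.
Local Open Scope ring_scope.

Definition assoc_ring_mul (V : zmodType) (mul : V -> V -> V) : Prop :=
  [/\ forall x y z, mul x (mul y z) = mul (mul x y) z,
      forall x y z, mul x (y + z) = mul x y + mul x z &
      forall x y z, mul (x + y) z = mul x z + mul y z].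

Definition torsion_free (V : zmodType) (k : nat) : Prop :=
  forall x : V, x *+ k = 0 -> x = 0.

Definition semiprime (V : zmodType) (mul : V -> V -> V) : Prop :=
  forall a : V, (forall r : V, mul (mul a r) a = 0) -> a = 0.

Definition additive_map (V : zmodType) (T : V -> V) : Prop :=
  forall x y, T (x + y) = T x + T y.

(* Main.v *)
Require Import Defs.
From mathcomp Require Import all_boot all_algebra.
Import GRing.Theory.
Local Open Scope ring_scope.

Inductive ztm : Type := zV of nat | zO | zP of ztm & ztm | zN of ztm | zZ of ztm & int.

Fixpoint zint {V : zmodType} (env : seq V) (t : ztm) : V :=
  match t with
  | zV i => nth 0 env i
  | zO => 0
  | zP a b => zint env a + zint env b
  | zN a => - zint env a
  | zZ a k => zint env a *~ k
  end.

Fixpoint zco (t : ztm) (i : nat) : int :=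
  match t with
  | zV j => if i == j then 1 else 0
  | zO => 0
  | zP a b => zco a i + zco b i
  | zN a => - zco a i
  | zZ a k => zco a i * k
  end.

Fixpoint zmx (t : ztm) : nat :=
  match t with
  | zV j => j.+1
  | zO => 0
  | zP a b => maxn (zmx a) (zmx b)
  | zN a => zmx a
  | zZ a k => zmx a
  end.

Lemma zsound (V : zmodType) (env : seq V) t n : (zmx t <= n)%N ->
  zint env t = \sum_(i < n) nth 0 env i *~ zco t i.
Proof.
elim: t => [j||a IHa b IHb|a IHa|a IHa k] /= hn.
- rewrite (bigD1 (Ordinal hn)) //= eqxx mulr1z big1 ?addr0 // => i /negPf.
  by move=> hi; rewrite -val_eqE /= in hi; rewrite hi mulr0z.
- by rewrite big1 // => i _; rewrite mulr0z.
- rewrite geq_max in hn; case/andP: hn => ha hb.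
  by rewrite IHa // IHb // -big_split /=; apply: eq_bigr => i _; rewrite mulrzDr.
- by rewrite IHa // -sumrN; apply: eq_bigr => i _; rewrite mulrNz.
- by rewrite IHa // mulrz_suml; apply: eq_bigr => i _; rewrite mulrzA.
Qed.

Lemma zdecide (V : zmodType) (env : seq V) l r :
  all (fun i => zco l i == zco r i) (iota 0 (maxn (zmx l) (zmx r))) ->
  zint env l = zint env r.
Proof.
move=> /allP h.
rewrite (@zsound _ _ l (maxn (zmx l) (zmx r))) ?leq_maxl //.
rewrite (@zsound _ _ r (maxn (zmx l) (zmx r))) ?leq_maxr //.
apply: eq_bigr => i _; have := h i; rewrite mem_iota /= add0n ltn_ord => /(_ isT) /eqP ->.
by [].
Qed.

Ltac zlookup x env n :=
  lazymatch env with
  | ?y :: ?rest => lazymatch x with y => n | _ => zlookup x rest constr:(S n) end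
  end.

Ltac zin x env :=
  lazymatch env with
  | nil => constr:(false)
  | ?y :: ?rest => lazymatch x with y => constr:(true) | _ => zin x rest end
  end.

Ltac zcollect t env :=
  lazymatch t with
  | @GRing.add _ ?a ?b => let e := zcollect a env in zcollect b e
  | @GRing.opp _ ?a => zcollect a env
  | @GRing.zero _ => env
  | @intmul _ ?a ?k => zcollect a env
  | _ => let b := zin t env in lazymatch b with true => env | false => constr:(t :: env) end
  end.

Ltac zreify t env :=
  lazymatch t with
  | @GRing.add _ ?a ?b => let ra := zreify a env in let rb := zreify b env in constr:(zP ra rb)
  | @GRing.opp _ ?a => let ra := zreify a env in constr:(zN ra)
  | @GRing.zero _ => constr:(zO)
  | @intmul _ ?a ?k => let ra := zreify a env in constr:(zZ ra k)
  | _ => let n := zlookup t env O in constr:(zV n)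
  end.

Ltac abel :=
  lazymatch goal with
  | |- @eq ?V ?l ?r =>
    let env := zcollect l (@nil V) in
    let env := zcollect r env in
    let rl := zreify l env in
    let rr := zreify r env in
    change (zint env rl = zint env rr); apply: zdecide; vm_compute; reflexivity
  end.

Lemma use_ {V : zmodType} (c : int) (h L R : V) : h = 0 -> L - h *~ c = R -> L = R.
Proof. by move=> ->; rewrite mul0rz subr0. Qed.


Section Main.
Variables (V : zmodType) (mul : V -> V -> V) (T : V -> V).
Local Infix "**" := mul (at level 40, left associativity).
Hypothesis mA : forall x y z, x ** (y ** z) = x ** y ** z.
Hypothesis mDr : forall x y z, x ** (y + z) = x ** y + x ** z.
Hypothesis mDl : forall x y z, (x + y) ** z = x ** z + y ** z.
Hypothesis sp : forall a : V, (forall r : V, a ** r ** a = 0) -> a = 0.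
Hypothesis tf2 : torsion_free V 2.
Hypothesis tf3 : torsion_free V 3.
Hypothesis TD : additive_map T.
Hypothesis H1 : forall x, T x ** (x ** (x ** x)) = 0.
Hypothesis H2 : forall x, T (x ** (x ** (x ** x))) = 0.

Lemma m0l y : 0 ** y = 0.
Proof. have h : 0 ** y + 0 ** y = 0 ** y + 0 by rewrite -mDl !addr0. exact: addrI h. Qed.
Lemma m0r y : y ** 0 = 0.
Proof. have h : y ** 0 + y ** 0 = y ** 0 + 0 by rewrite -mDr !addr0. exact: addrI h. Qed.
Lemma mNl x y : (- x) ** y = - (x ** y).
Proof. have h : x ** y + (- x) ** y = x ** y + - (x ** y) by rewrite -mDl !subrr m0l. exact: addrI h. Qed.
Lemma mNr x y : x ** (- y) = - (x ** y).
Proof. have h : x ** y + x ** (- y) = x ** y + - (x ** y) by rewrite -mDr !subrr m0r. exact: addrI h. Qed.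
Lemma T0 : T 0 = 0.
Proof. have h : T 0 + T 0 = T 0 + 0 by rewrite -TD !addr0. exact: addrI h. Qed.
Lemma TN x : T (- x) = - T x.
Proof. have h : T x + T (- x) = T x + - T x by rewrite -TD !subrr T0. exact: addrI h. Qed.

Ltac use H c := eapply (@use_ V c _ _ _ H).
Ltac nrm := repeat progress rewrite ?mDl ?mDr ?mNl ?mNr ?m0l ?m0r ?TD ?TN ?T0 ?mA.

Lemma tf6 (z : V) : z *~ 6%:Z = 0 -> z = 0.
Proof. by move=> h; apply: tf3; apply: tf2; rewrite -mulrnA. Qed.

Lemma LA x y : T y ** x ** x ** x + T x ** y ** x ** x + T x ** x ** y ** x + T x ** x ** x ** y = 0.
Proof.
apply: tf6.
use (H1 (x + y)) 6%:Z; use (H1 (x - y)) (-2%:Z); use (H1 (x + (y + y))) (-1%:Z); use (H1 x) (-3%:Z); use (H1 y) 12%:Z.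
nrm; abel.
Qed.


Lemma LB x y : T (y ** x ** x ** x + x ** y ** x ** x + x ** x ** y ** x + x ** x ** x ** y) = 0.
Proof.
apply: tf6.
use (H2 (x + y)) 6%:Z; use (H2 (x - y)) (-2%:Z); use (H2 (x + (y + y))) (-1%:Z); use (H2 x) (-3%:Z); use (H2 y) 12%:Z.
nrm; abel.
Qed.

Lemma lm0 u {h} : h = 0 -> u ** h = 0.
Proof. by move=> ->; rewrite m0r. Qed.
Lemma rm0 u {h} : h = 0 -> h ** u = 0.
Proof. by move=> ->; rewrite m0l. Qed.

Lemma H1r x v : T x ** x ** x ** x ** v = 0.
Proof. by apply: rm0; rewrite -!mA. Qed.

Lemma LE x w : T x ** w ** x ** x ** x ** x ** x + (T x ** x ** w ** x ** x ** x ** x) *~ 2%:Z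
  + (T x ** x ** x ** w ** x ** x ** x) *~ 3%:Z = 0.
Proof.
use (rm0 (x ** x ** x) (LB x w)) (-1%:Z).
use (LA x (w ** x ** x ** x)) 1%:Z; use (LA x (x ** w ** x ** x)) 1%:Z.
use (LA x (x ** x ** w ** x)) 1%:Z; use (LA x (x ** x ** x ** w)) 1%:Z.
use (H1r x (w ** x ** x)) (-3%:Z); use (H1r x (x ** w ** x)) (-2%:Z); use (H1r x (x ** x ** w)) (-1%:Z).
nrm; abel.
Qed.


Fixpoint xl (x : V) (i : nat) (w : V) : V := if i is i'.+1 then x ** xl x i' w else w.
Fixpoint xr (x : V) (j : nat) (w : V) : V := if j is j'.+1 then xr x j' w ** x else w.
Definition Q x i j := forall W, T x ** xr x j (xl x i W) = 0.

Lemma xrM x j u v : xr x j (u ** v) = u ** xr x j v.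
Proof. by elim: j => //= j ->; rewrite mA. Qed.

Lemma QH x i j : Q x i.+3 j.
Proof. by move=> W /=; rewrite !xrM !mA H1r. Qed.

Lemma rmx x k {h} : h = 0 -> xr x k h = 0.
Proof. by move=> h0; elim: k => [|k IH] //=; rewrite IH m0l. Qed.

Ltac ustep x i j jm2 Qa Qb Qc :=
  let W := fresh "W" in let r := fresh "r" in
  move=> W; apply: sp => r;
  use (lm0 (T x ** xr x j (xl x i W) ** r) (rmx x jm2 (LA x (xl x i W)))) 1%:Z;
  use (Qa (xr x j W ** r ** T (xl x i W))) (-1%:Z);
  use (lm0 (T x ** xr x j (xl x i W) ** r) (Qb W)) (-1%:Z);
  use (lm0 (T x ** xr x j (xl x i W) ** r) (Qc W)) (-1%:Z);
  cbn [xr xl]; nrm; abel.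

Lemma desc x : Q x 2 0 /\ Q x 1 1 /\ Q x 0 2.
Proof.
have q25 : Q x 2 5.
  move=> W; cbn [xr xl].
  use (LE x (x ** x ** W)) 1%:Z; use (H1r x (W ** x ** x ** x ** x)) (-2%:Z).
  use (H1r x (x ** W ** x ** x ** x)) (-3%:Z); nrm; abel.
have q16 : Q x 1 6.
  move=> W; use (rm0 x (LE x (x ** W))) 1%:Z; use (q25 W) (-2%:Z).
  use (H1r x (W ** x ** x ** x ** x)) (-3%:Z); cbn [xr xl]; nrm; abel.
have q07 : Q x 0 7.
  move=> W; use (rm0 (x ** x) (LE x W)) 1%:Z; use (q16 W) (-2%:Z); use (q25 W) (-3%:Z).
  cbn [xr xl]; nrm; abel.
have q24 : Q x 2 4 by ustep x 2%N 4%N 2%N q25 (QH x 0%N 3%N) (QH x 1%N 2%N).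
have q15 : Q x 1 5 by ustep x 1%N 5%N 3%N q16 q24 (QH x 0%N 3%N).
have q06 : Q x 0 6 by ustep x 0%N 6%N 4%N q07 q15 q24.
have q23 : Q x 2 3 by ustep x 2%N 3%N 1%N q24 (QH x 0%N 2%N) (QH x 1%N 1%N).
have q14 : Q x 1 4 by ustep x 1%N 4%N 2%N q15 q23 (QH x 0%N 2%N).
have q05 : Q x 0 5 by ustep x 0%N 5%N 3%N q06 q14 q23.
have q22 : Q x 2 2 by ustep x 2%N 2%N 0%N q23 (QH x 0%N 1%N) (QH x 1%N 0%N).
have q13 : Q x 1 3 by ustep x 1%N 3%N 1%N q14 q22 (QH x 0%N 1%N).
have q04 : Q x 0 4 by ustep x 0%N 4%N 2%N q05 q13 q22.
have q21 : Q x 2 1.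
  move=> W; apply: sp => r; cbn [xr xl].
  use (lm0 (T x ** (x ** (x ** W)) ** x ** r) (LA x (W ** x))) 1%:Z.
  use (q22 (W ** x ** r ** T (W ** x) ** x)) (-1%:Z).
  use (q22 (W ** x ** r ** (T x ** W ** x))) (-1%:Z).
  use (q22 (W ** x ** r ** (T x ** x ** W))) (-1%:Z).
  cbn [xr xl]; nrm; abel.
have q12 : Q x 1 2 by ustep x 1%N 2%N 0%N q13 q21 (QH x 0%N 0%N).
have q03 : Q x 0 3 by ustep x 0%N 3%N 1%N q04 q12 q21.
have q20 : Q x 2 0.
  move=> W; apply: sp => r; cbn [xr xl].
  use (lm0 (T x ** (x ** (x ** W)) ** r) (LA x W)) 1%:Z.
  use (q21 (W ** r ** T W ** x ** x)) (-1%:Z).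
  use (q21 (W ** r ** (T x ** W ** x))) (-1%:Z).
  use (q21 (W ** r ** (T x ** x ** W))) (-1%:Z).
  cbn [xr xl]; nrm; abel.
have q11 : Q x 1 1.
  move=> W; apply: sp => r; cbn [xr xl].
  use (lm0 (T x ** (x ** W) ** x ** r) (LA x W)) 1%:Z.
  use (q12 (W ** x ** r ** T W ** x)) (-1%:Z).
  use (q12 (W ** x ** r ** (T x ** W))) (-1%:Z).
  use (lm0 (T x ** (x ** W) ** x ** r) (q20 W)) (-1%:Z).
  cbn [xr xl]; nrm; abel.
have q02 : Q x 0 2 by ustep x 0%N 2%N 0%N q03 q11 q20.
by [].
Qed.


Lemma Ax2 x : T x ** x ** x = 0.
Proof.
apply: sp => r; have [q20 _] := desc x.
use (q20 (r ** (T x ** x ** x))) 1%:Z; cbn [xr xl]; nrm; abel.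
Qed.

Lemma L2 x y : T y ** x ** x + T x ** x ** y + T x ** y ** x = 0.
Proof.
apply: tf2; rewrite pmulrn.
use (Ax2 (x + y)) 1%:Z; use (Ax2 (x - y)) (-1%:Z); use (Ax2 y) (-2%:Z); nrm; abel.
Qed.

Lemma Q10 x W : T x ** x ** W = 0.
Proof.
apply: sp => r; have [_ [q11 _]] := desc x.
use (lm0 (T x ** x ** W ** r) (L2 x W)) 1%:Z.
use (q11 (W ** r ** T W ** x)) (-1%:Z); use (q11 (W ** r ** (T x ** W))) (-1%:Z).
cbn [xr xl]; nrm; abel.
Qed.

Lemma Ax1 x : T x ** x = 0.
Proof. apply: sp => r; use (Q10 x (r ** (T x ** x))) 1%:Z; nrm; abel. Qed.

Lemma Q01 x W : T x ** W ** x = 0.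
Proof.
apply: sp => r; have [_ [_ q02]] := desc x.
use (lm0 (T x ** W ** x ** r) (L2 x W)) 1%:Z.
use (q02 (W ** x ** r ** T W)) (-1%:Z); use (lm0 (T x ** W ** x ** r) (Q10 x W)) (-1%:Z).
cbn [xr xl]; nrm; abel.
Qed.

Lemma L1 x y : T x ** y + T y ** x = 0.
Proof. use (Ax1 (x + y)) 1%:Z; use (Ax1 x) (-1%:Z); use (Ax1 y) (-1%:Z); nrm; abel. Qed.

Lemma Q00 x W : T x ** W = 0.
Proof.
apply: sp => r.
use (lm0 (T x ** W ** r) (L1 x W)) 1%:Z; use (Q01 x (W ** r ** T W)) (-1%:Z).
nrm; abel.
Qed.

Lemma Tz x : T x = 0.
Proof. apply: sp => r; use (Q00 x (r ** T x)) 1%:Z; nrm; abel. Qed.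

Lemma final x y : T (x ** y) = T x ** y.
Proof. by rewrite !Tz m0l. Qed.

End Main.



Theorem lemma2p5 (V : zmodType) (mul : V -> V -> V) (T : V -> V) :
  assoc_ring_mul mul ->
  semiprime mul ->
  torsion_free V 2 ->
  torsion_free V 3 ->
  additive_map T ->
  (forall x, mul (T x) (mul x (mul x x)) = 0) ->
  (forall x, T (mul x (mul x (mul x x))) = 0) ->
  forall x y, T (mul x y) = mul (T x) y.
Proof.
move=> [mA mDr mDl] sp tf2 tf3 TD H1 H2.
exact: (@final V mul T mA mDr mDl sp tf2 tf3 TD H1 H2).
Qed.
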